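(* For any continuous function $f:\mathrm{SO}(2)\to\mathbb{R}$, there exists a rotation $R\in\mathrm{SO}(2)$ such that the rotation of angle $f(R)$ differs from $R$ by a rotation of angle $\pi$, i.e. $\rho(f(R))R^{-1}=\rho(\pi)$.
   Context: For $\theta\in\mathbb{R}$, $\rho(\theta)=\begin{bmatrix}\cos\theta&-\sin\theta\\ \sin\theta&\cos\theta\end{bmatrix}\in\mathrm{SO}(2)$ denotes the rotation of angle $\theta$. *)

(* Defs.v *)
From HB Require Import structures.
From mathcomp Require Import all_boot all_order all_algebra.
From mathcomp Require Import all_classical all_reals all_analysis.
Set Implicit Arguments. Unset Strict Implicit. Unset Printing Implicit Defensive.
Import Order.TTheory GRing.Theory Num.Theory.
Import numFieldNormedType.Exports.
Local Open Scope ring_scope.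
Local Open Scope classical_set_scope.

Definition rho (R : realType) (t : R) : 'M[R]_2 :=
  \matrix_(i < 2, j < 2)
    (if (val i == 0%N) && (val j == 0%N) then cos t
     else if (val i == 0%N) then - sin t
     else if (val j == 0%N) then sin t
     else cos t).

Definition SO2 (R : realType) : set 'M[R]_2 :=
  [set M | M^T *m M = 1%:M /\ \det M = 1].
Arguments SO2 R : clear implicits.

(* Main.v *)
Require Import Defs.
From HB Require Import structures.
From mathcomp Require Import all_boot all_order all_algebra.
From mathcomp Require Import all_classical all_reals all_analysis.
From mathcomp Require Import lra.
Import Order.TTheory GRing.Theory Num.Theory.
Import numFieldNormedType.Exports.
Local Open Scope ring_scope.
Local Open Scope classical_set_scope.

Section S.
Variable R : realType.

Definition Jm : 'M[R]_2 := \matrix_(i < 2, j < 2)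
  (if (val i == 0%N) && (val j == 0%N) then 0
     else if (val i == 0%N) then -1
     else if (val j == 0%N) then 1 else 0).

Lemma rhoE (t : R) : rho t = cos t *: 1%:M + sin t *: Jm.
Proof.
apply/matrixP => i j; rewrite !mxE.
case: i => [[|[|i]] Hi] //; case: j => [[|[|j]] Hj] //=; 
  rewrite ?mulr1 ?mulr0 ?addr0 ?add0r ?mulrN1 //.
Qed.

Lemma rhoD (a b : R) : rho a *m rho b = rho (a + b).
Proof.
apply/matrixP => i j; rewrite !mxE big_ord_recr big_ord_recr big_ord0 /= !mxE add0r.
case: i => [[|[|i]] Hi] //; case: j => [[|[|j]] Hj] //=; rewrite ?cosD ?sinD; lra.
Qed.

Lemma rho0 : @rho R 0 = 1%:M.
Proof.
apply/matrixP => i j; rewrite !mxE cos0 sin0 oppr0.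
case: i => [[|[|i]] Hi] //; case: j => [[|[|j]] Hj] //=.
Qed.

Lemma rhoT (t : R) : (rho t)^T = rho (- t).
Proof.
apply/matrixP => i j; rewrite !mxE cosN sinN opprK.
case: i => [[|[|i]] Hi] //; case: j => [[|[|j]] Hj] //=.
Qed.

Lemma det_rho (t : R) : \det (rho t) = 1.
Proof.
rewrite (expand_det_row _ ord0) big_ord_recr big_ord_recr big_ord0 /= add0r.
rewrite /cofactor !det_mx11 !mxE /=.
have := cos2Dsin2 t; rewrite /= expr0 expr1; lra.
Qed.

Lemma SO2_rho (t : R) : SO2 R (rho t).
Proof. by split; [rewrite rhoT rhoD addNr rho0 | exact: det_rho]. Qed.

Lemma rho_cont : continuous (@rho R).
Proof.
have -> : @rho R = fun t => cos t *: 1%:M + sin t *: Jm.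
  by apply/funext => t; rewrite rhoE.
move=> t; apply: (@continuousD _ _ _ (fun t => cos t *: (1%:M : 'M[R]_2)) (fun t => sin t *: Jm)).
  by apply: continuousZr_tmp; exact: continuous_cos.
by apply: continuousZr_tmp; exact: continuous_sin.
Qed.

Lemma cos_per (x : R) (n : int) : cos (x + pi *+ 2 * n%:~R) = cos x.
Proof.
case: n => n.
  by rewrite pmulrn mulr_natr (periodicn (@cosD2pi R)).
rewrite NegzE mulrNz mulrN pmulrn -[in RHS](subrK (pi *+ 2 * (n.+1)%:R) x).
by rewrite mulr_natr (periodicn (@cosD2pi R)).
Qed.

Lemma sin_per (x : R) (n : int) : sin (x + pi *+ 2 * n%:~R) = sin x.
Proof.
case: n => n.
  by rewrite pmulrn mulr_natr (periodicn (@sinD2pi R)).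
rewrite NegzE mulrNz mulrN pmulrn -[in RHS](subrK (pi *+ 2 * (n.+1)%:R) x).
by rewrite mulr_natr (periodicn (@sinD2pi R)).
Qed.

Lemma rho_per (x : R) (n : int) : rho (x + pi *+ 2 * n%:~R) = rho x.
Proof. by apply/matrixP => i j; rewrite !mxE cos_per sin_per. Qed.

End S.

Theorem theorem3 (R : realType) (f : 'M[R]_2 -> R)
  (hf : {within SO2 R, continuous f}) :
  exists M : 'M[R]_2, SO2 R M /\ rho (f M) *m invmx M = rho pi.
Proof.
have fc : forall t : R, (fun s => f (rho s)) @ t --> f (rho t).
  move=> t; have /subspace_continuousP H := hf.
  have := H _ (SO2_rho _ t).
  move=> H1; refine (cvg_trans _ H1).
  move=> P /= HP.
  have := @rho_cont R t _ HP.
  move=> Hn; rewrite /= /nbhs /=.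
  rewrite /nbhs /= in Hn; case: Hn => e e0 He; exists e => // s /He; apply; exact: SO2_rho.
pose g := fun s : R => f (rho s) - pi - s.
have gc : continuous g.
  move=> t; rewrite /g; apply: cvgB; [apply: cvgB; [exact: fc | exact: cvg_cst] | exact: cvg_id].
pose T := pi *+ 2 : R.
have T0 : 0 < T by rewrite /T mulrn_wgt0 // pi_gt0.
have gT : g T = g 0 - T.
  rewrite /g; have := @rho_per R 0 1; rewrite add0r mulr1 => ->; rewrite /T; lra.
pose n := Num.floor (g 0 / T).
have [hn1 hn2] : n%:~R <= g 0 / T /\ g 0 / T < n%:~R + 1.
  by have /andP[] := floor_itv (g 0 / T); rewrite intrD.
have e : T * (g 0 / T) = g 0 by rewrite mulrC -mulrA mulVf ?mulr1 ?gt_eqF.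
have v1 : T * n%:~R <= g 0 by rewrite -[X in _ <= X]e ler_pM2l.
have v2 : g 0 - T <= T * n%:~R.
  have : T * (g 0 / T) < T * (n%:~R + 1) by rewrite ltr_pM2l.
  rewrite e mulrDr mulr1 => h; lra.
have gc' : {within `[0, T], continuous g}.
  by apply: continuous_subspaceT => y; exact: gc.
have hv : Num.min (g 0) (g T) <= T * n%:~R <= Num.max (g 0) (g T).
  rewrite gT; apply/andP; split.
    by rewrite ge_min v2 orbT.
  by rewrite le_max v1.
have [t _ gt] := @IVT R g 0 T (T * n%:~R) (ltW T0) gc' hv.
exists (rho t); split; first exact: SO2_rho.
have -> : f (rho t) = (pi + t) + T * n%:~R by move: gt; rewrite /g; lra.
rewrite rho_per -rhoD mulmxK // unitmxE det_rho; exact: unitr1.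
Qed.
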